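(* Let $m_1,m_2\geq1$, $m=m_1+m_2$, $j=\mathrm{diag}(I_{m_1},-I_{m_2})$, $n\in\mathbb{N}$, and let $\{A,S_0,\Pi_0\}$ be an admissible triple. Define $\Pi_k,S_k$ $(k\geq0)$ by the recursions $\Pi_{k+1}=\Pi_k+\mathrm{i} A^{-1}\Pi_k j$, $S_{k+1}=S_k+A^{-1}S_k(A^* )^{-1}+A^{-1}\Pi_k\Pi_k^*(A^* )^{-1}$. Then all $S_k$ are invertible, so that the matrices $C_k:=I_m+\Pi_k^*S_k^{-1}\Pi_k-\Pi_{k+1}^*S_{k+1}^{-1}\Pi_{k+1}$ are well defined, and they satisfy $C_k>0$ and $C_kjC_k=j$ for all $k\geq 0$. Moreover, the fundamental solution $\{W_k\}$ of the Dirac system $y_{k+1}(z)=(I_m+\mathrm{i} zjC_k)y_k(z)$ admits the representation $$W_k(z)=w_A(k,-1/z)\,(I_m+\mathrm{i} zj)^k\,w_A(0,-1/z)^{-1}\qquad(k\geq0),$$ where $w_A(k,\lambda):=I_m-\mathrm{i} j\Pi_k^*S_k^{-1}(A-\lambda I_n)^{-1}\Pi_k$ (for those $z\neq0$ at which the right-hand side is defined).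
   Context: A triple $\{A,S_0,\Pi_0\}$ is called admissible if $A$ is an invertible $n\times n$ matrix, $S_0$ is a positive definite $n\times n$ matrix, $\Pi_0$ is an $n\times m$ matrix, and $AS_0-S_0A^*=\mathrm{i}\Pi_0j\Pi_0^*$. The fundamental solution is defined by $W_0(z)=I_m$, $W_{k+1}(z)=(I_m+\mathrm{i} zjC_k)W_k(z)$. *)

(* Defs.v *)
(* Complex scalars: an arbitrary numClosedFieldType C
   (e.g. complex numbers over a realType); this generalizes C = the complex field. *)
From HB Require Import structures.
From mathcomp Require Import all_boot all_order all_algebra.
Set Implicit Arguments. Unset Strict Implicit. Unset Printing Implicit Defensive.
Import Order.TTheory GRing.Theory Num.Theory.
Local Open Scope ring_scope.

Section Defs.
Variable C : numClosedFieldType.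

Definition ctr (p q : nat) (M : 'M[C]_(p, q)) : 'M[C]_(q, p) := (map_mx Num.conj M)^T.

(* positive definite: v^* M v > 0 for all nonzero v (in a numClosedField,
   0 < x forces x real); for complex matrices this implies M hermitian *)
Definition posdef (p : nat) (M : 'M[C]_p) : Prop :=
  forall v : 'cV[C]_p, v != 0 -> 0 < (ctr v *m M *m v) 0 0.

Definition jmat (m1 m2 : nat) : 'M[C]_(m1 + m2) := block_mx 1%:M 0 0 (- 1%:M).

Definition admissible (n m : nat) (j : 'M[C]_m) (A S0 : 'M[C]_n) (Pi0 : 'M[C]_(n, m)) : Prop :=
  [/\ A \in unitmx, posdef S0 &
      A *m S0 - S0 *m ctr A = 'i *: (Pi0 *m j *m ctr Pi0)].

Variables (n m : nat) (j : 'M[C]_m) (A S0 : 'M[C]_n) (Pi0 : 'M[C]_(n, m)).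

Fixpoint Pik (k : nat) : 'M[C]_(n, m) :=
  match k with
  | 0 => Pi0
  | k'.+1 => Pik k' + 'i *: (invmx A *m Pik k' *m j)
  end.

Fixpoint Sk (k : nat) : 'M[C]_n :=
  match k with
  | 0 => S0
  | k'.+1 => Sk k' + invmx A *m Sk k' *m invmx (ctr A)
             + invmx A *m Pik k' *m ctr (Pik k') *m invmx (ctr A)
  end.

Definition Ck (k : nat) : 'M[C]_m :=
  1%:M + ctr (Pik k) *m invmx (Sk k) *m Pik k
       - ctr (Pik k.+1) *m invmx (Sk k.+1) *m Pik k.+1.

Fixpoint Wk (z : C) (k : nat) : 'M[C]_m :=
  match k with
  | 0 => 1%:M
  | k'.+1 => (1%:M + ('i * z) *: (j *m Ck k')) *m Wk z k'
  end.

Definition wA (k : nat) (lam : C) : 'M[C]_m :=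
  1%:M - 'i *: (j *m ctr (Pik k) *m invmx (Sk k) *m invmx (A - lam%:M) *m Pik k).

End Defs.

(* Main.v *)
Require Import Defs.
From HB Require Import structures.
From mathcomp Require Import all_boot all_order all_algebra.
From mathcomp Require Import ring.
Set Implicit Arguments. Unset Strict Implicit. Unset Printing Implicit Defensive.
Import Order.TTheory GRing.Theory Num.Theory.
Local Open Scope ring_scope.
Section Ctr.
Variable C : numClosedFieldType.
Implicit Types (p q r : nat).
Lemma ctrM p q r (X : 'M[C]_(p,q)) (Y : 'M[C]_(q,r)) : ctr (X *m Y) = ctr Y *m ctr X.
Proof. by rewrite /ctr map_mxM trmx_mul. Qed.
Lemma ctrD p q (X Y : 'M[C]_(p,q)) : ctr (X + Y) = ctr X + ctr Y.
Proof. by rewrite /ctr map_mxD linearD. Qed.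
Lemma ctrN p q (X : 'M[C]_(p,q)) : ctr (- X) = - ctr X.
Proof. by rewrite /ctr map_mxN linearN. Qed.
Lemma ctrB p q (X Y : 'M[C]_(p,q)) : ctr (X - Y) = ctr X - ctr Y.
Proof. by rewrite ctrD ctrN. Qed.
Lemma ctrZ p q a (X : 'M[C]_(p,q)) : ctr (a *: X) = a^* *: ctr X.
Proof. by rewrite /ctr map_mxZ linearZ. Qed.
Lemma ctrK p q (X : 'M[C]_(p,q)) : ctr (ctr X) = X.
Proof. by apply/matrixP=> i k; rewrite !mxE conjCK. Qed.
Lemma ctr1 p : ctr (1%:M : 'M[C]_p) = 1%:M.
Proof. by rewrite /ctr map_mx1 trmx1. Qed.
Lemma ctr0 p q : ctr (0 : 'M[C]_(p,q)) = 0.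
Proof. by rewrite /ctr map_mx0 trmx0. Qed.
Lemma ctrV p (X : 'M[C]_p) : ctr (invmx X) = invmx (ctr X).
Proof. by rewrite /ctr map_invmx trmx_inv. Qed.
Lemma ctr_unit p (X : 'M[C]_p) : (ctr X \in unitmx) = (X \in unitmx).
Proof. by rewrite /ctr unitmx_tr map_unitmx. Qed.
End Ctr.
Section Basic.
Variable C : numClosedFieldType.

Lemma cnorm_ge0 p (u : 'cV[C]_p) : 0 <= (ctr u *m u) 0 0.
Proof.
rewrite mxE; apply: sumr_ge0 => i _; rewrite !mxE -normCKC.
exact: exprn_ge0.
Qed.

Lemma cnorm_gt0 p (u : 'cV[C]_p) : u != 0 -> 0 < (ctr u *m u) 0 0.
Proof.
move=> u0.
have [i ui] : exists i, u i 0 != 0.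
  apply/existsP; apply: contraR u0; rewrite negb_exists => /forallP H.
  apply/eqP/matrixP => a b; rewrite (ord1 b) mxE; exact/eqP/negPn/H.
rewrite mxE (bigD1 i) //= !mxE -normCKC; apply: ltr_pwDl.
  by rewrite exprn_gt0 // normr_gt0.
by apply: sumr_ge0 => k _; rewrite !mxE -normCKC exprn_ge0.
Qed.

Lemma posdef_ge0 p (M : 'M[C]_p) : posdef M -> forall v : 'cV[C]_p, 0 <= (ctr v *m M *m v) 0 0.
Proof.
move=> pd v; have [->|v0] := eqVneq v 0; first by rewrite mulmx0 mxE.
exact/ltW/pd.
Qed.

Lemma posdef_unit p (M : 'M[C]_p) : posdef M -> M \in unitmx.
Proof.
move=> pd; rewrite unitmxE unitfE -det_tr; apply/negP => /det0P [v v0 vM].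
have Mv : M *m v^T = 0 by rewrite -[M]trmxK -trmx_mul vM trmx0.
have := pd v^T; rewrite trmx_eq0 v0 -mulmxA Mv mulmx0 mxE => /(_ isT).
by rewrite ltxx.
Qed.

Lemma ctr_scalar11 (x : 'M[C]_1) : ctr x = x -> (x 0 0)^* = x 0 0.
Proof. by move/matrixP/(_ 0 0); rewrite !mxE. Qed.

Lemma ctr_delta p (a : 'I_p) : ctr (delta_mx a 0 : 'cV[C]_p) = delta_mx 0 a.
Proof. by apply/matrixP => x y; rewrite !mxE rmorph_nat andbC. Qed.

Lemma polar p (H : 'M[C]_p) :
  (forall v : 'cV[C]_p, ctr v *m H *m v = 0) -> H = 0.
Proof.
move=> q0.
have pol : forall u w : 'cV[C]_p, ctr u *m H *m w = 0.
  move=> u w.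
  have e1 := q0 (u + w); have e2 := q0 (u + 'i *: w).
  rewrite !ctrD !mulmxDl !mulmxDr !q0 add0r addr0 in e1.
  rewrite !ctrD !ctrZ !mulmxDl !mulmxDr -!scalemxAl -!scalemxAr !q0 ?scaler0 ?add0r ?addr0 in e2.
  rewrite conjCi scaleNr in e2.
  have e3 : 'i *: (ctr u *m H *m w - ctr w *m H *m u) = 0.
    by rewrite scalerBr.
  move/eqP: e3; rewrite scaler_eq0 (negPf (neq0Ci _)) /= subr_eq0 => /eqP e3.
  rewrite e3 in e1 *; move/eqP: e1; rewrite -mulr2n -scaler_nat scaler_eq0 pnatr_eq0 /=.
  by move/eqP.
apply/matrixP => a b; have := pol (delta_mx a 0) (delta_mx b 0).
rewrite ctr_delta -rowE -colE => /matrixP/(_ 0 0); by rewrite !mxE.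
Qed.

Lemma posdef_herm p (M : 'M[C]_p) : posdef M -> ctr M = M.
Proof.
move=> pd; set H := M - ctr M.
have q0 : forall v : 'cV[C]_p, ctr v *m H *m v = 0.
  move=> v; set x := ctr v *m M *m v.
  have qr : (x 0 0)^* = x 0 0.
    have [v0|v0] := eqVneq v 0; first by rewrite /x v0 mulmx0 mxE conjC0.
    exact/conj_Creal/gtr0_real/pd.
  have -> : ctr v *m H *m v = x - ctr x by rewrite /H mulmxBr mulmxBl /x !ctrM ctrK !mulmxA.
  apply/eqP; rewrite subr_eq0; apply/eqP/matrixP => a b.
  by rewrite (ord1 a) (ord1 b) [in RHS]mxE [in RHS]mxE qr.
by have /eqP := polar q0; rewrite /H subr_eq0 eq_sym => /eqP.
Qed.
End Basic.

Section Ent.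
Variable C : numClosedFieldType.
Lemma eD p q (X Y : 'M[C]_(p,q)) a b : (X + Y) a b = X a b + Y a b. Proof. by rewrite mxE. Qed.
Lemma eN p q (X : 'M[C]_(p,q)) a b : (- X) a b = - X a b. Proof. by rewrite mxE. Qed.
Lemma eZ p q c (X : 'M[C]_(p,q)) a b : (c *: X) a b = c * X a b. Proof. by rewrite mxE. Qed.
Lemma e0 p q a b : (0 : 'M[C]_(p,q)) a b = 0. Proof. by rewrite mxE. Qed.
Lemma conjN (x : C) : (- x)^* = - x^*. Proof. exact: rmorphN. Qed.
Lemma conjM (x y : C) : (x * y)^* = x^* * y^*. Proof. exact: rmorphM. Qed.
End Ent.

Ltac ctrnorm := repeat progress rewrite ?ctrM ?ctrD ?ctrB ?ctrN ?ctrZ ?ctrK ?ctr1 ?ctr0 ?ctrV ?conjN ?conjM ?conjCi ?opprK.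
Ltac mxexpand := repeat progress rewrite ?mulmxDl ?mulmxDr ?mulmxBl ?mulmxBr ?mulmxN ?mulNmx ?mul0mx ?mulmx0
   ?mulmx1 ?mul1mx ?mul_scalar_mx ?mul_mx_scalar -?scalemxAl -?scalemxAr ?mulmxA ?scalerDr ?scalerBr ?scalerA ?scaleNr ?scalerN ?mulNr ?mulrN ?mulCii ?opprK
   ?scaleN1r ?scale1r ?scaler0 ?scale0r.
Ltac entring := apply/matrixP => ? ?; repeat progress rewrite ?eD ?eN ?eZ ?e0 ?mulrDr ?mulrBr ?mulrN ?mulrA ?mulCii; match goal with K : numClosedFieldType |- _ => ring: (mulCii K) end.

Section Step.
Variables (C : numClosedFieldType) (n m : nat) (j : 'M[C]_m) (A S Ti : 'M[C]_n) (P : 'M[C]_(n,m)).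
Hypotheses (hj : j *m j = 1%:M) (hjc : ctr j = j) (hA : A \in unitmx) (hS : S \in unitmx)
  (hSh : ctr S = S) (hid : A *m S - S *m ctr A = 'i *: (P *m j *m ctr P)).
Local Notation G := (A *m P + 'i *: (P *m j)).
Local Notation T := (S + A *m S *m ctr A + P *m ctr P).
Hypotheses (hTi1 : Ti *m T = 1%:M) (hTih : ctr Ti = Ti).

Lemma jj p (X : 'M[C]_(p,m)) : X *m j *m j = X. Proof. by rewrite -mulmxA hj mulmx1. Qed.
Lemma cS1 p (Y : 'M[C]_(p,n)) : Y *m S *m invmx S = Y. Proof. exact: mulmxK. Qed.
Lemma cS2 p (Y : 'M[C]_(p,n)) : Y *m invmx S *m S = Y. Proof. exact: mulmxKV. Qed.
Lemma cA1 p (Y : 'M[C]_(p,n)) : Y *m A *m invmx A = Y. Proof. exact: mulmxK. Qed.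
Lemma cA2 p (Y : 'M[C]_(p,n)) : Y *m invmx A *m A = Y. Proof. exact: mulmxKV. Qed.
Lemma hAc : ctr A \in unitmx. Proof. by rewrite ctr_unit. Qed.
Lemma cAc1 p (Y : 'M[C]_(p,n)) : Y *m ctr A *m invmx (ctr A) = Y. Proof. exact: (mulmxK hAc). Qed.
Lemma cAc2 p (Y : 'M[C]_(p,n)) : Y *m invmx (ctr A) *m ctr A = Y. Proof. exact: (mulmxKV hAc). Qed.
Lemma cT p (Y : 'M[C]_(p,n)) : Y *m Ti *m T = Y. Proof. by rewrite -mulmxA hTi1 mulmx1. Qed.

Lemma hK0 : P *m j *m ctr P = 'i *: (S *m ctr A) - 'i *: (A *m S).
Proof.
have -> : P *m j *m ctr P = - 'i *: ('i *: (P *m j *m ctr P)).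
  by rewrite scalerA mulNr mulCii opprK scale1r.
by rewrite -hid scalerBr !scaleNr opprK addrC.
Qed.

Lemma hK p (Y : 'M[C]_(p,n)) : Y *m P *m j *m ctr P = 'i *: (Y *m S *m ctr A) - 'i *: (Y *m A *m S).
Proof.
have -> : Y *m P *m j *m ctr P = Y *m (P *m j *m ctr P) by rewrite !mulmxA.
by rewrite hK0 mulmxBr -!scalemxAr !mulmxA.
Qed.

Lemma L1_raw :
  let D := A *m S - S *m ctr A - 'i *: (P *m j *m ctr P) in
  A *m T - T *m ctr A - 'i *: (G *m j *m ctr G) = D + A *m D *m ctr A.
Proof.
move=> D; rewrite /D; ctrnorm; rewrite ?hjc; mxexpand; rewrite ?jj.
entring.
Qed.

Lemma idT : A *m T - T *m ctr A = 'i *: (G *m j *m ctr G).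
Proof.
apply/eqP; rewrite -subr_eq0 L1_raw hid subrr mulmx0 mul0mx addr0 //.
Qed.

Lemma hermT : ctr T = T.
Proof. by ctrnorm; rewrite hSh !mulmxA. Qed.

Local Notation Cm := (1%:M + ctr P *m invmx S *m P - ctr G *m Ti *m G).
Section R.
Variable R : 'M[C]_n.
Hypothesis hRA : R *m A = A *m R.
Lemma hRA' p (Y : 'M[C]_(p,n)) : Y *m R *m A = Y *m A *m R.
Proof. by rewrite -mulmxA hRA mulmxA. Qed.

Lemma KG : 'i *: (A *m R *m G) + G *m j *m ctr P *m invmx S *m R *m P + R *m G *m j
   = 'i *: (T *m invmx S *m R *m P).
Proof.
mxexpand; rewrite ?jj ?hK ?hK0 ?hRA ?hRA'; mxexpand; rewrite ?cS1 ?cS2 ?mulmxV ?mulVmx //; mxexpand.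
entring.
Qed.

Lemma KP : - 'i *: (A *m R *m P) - P *m j *m ctr P *m invmx S *m R *m P
   = - 'i *: (S *m ctr A *m invmx S *m R *m P).
Proof.
rewrite hK0; mxexpand; rewrite ?cS1 ?cS2; mxexpand.
entring.
Qed.

Lemma ZZ : 'i *: (ctr G *m Ti *m A *m R *m G) - 'i *: (ctr P *m invmx S *m A *m R *m P)
   - Cm *m j *m ctr P *m invmx S *m R *m P + ctr G *m Ti *m R *m G *m j = 0.
Proof.
transitivity (ctr G *m Ti *m ('i *: (A *m R *m G) + G *m j *m ctr P *m invmx S *m R *m P + R *m G *m j)
  + ctr P *m invmx S *m (- 'i *: (A *m R *m P) - P *m j *m ctr P *m invmx S *m R *m P)
  - j *m ctr P *m invmx S *m R *m P).
  ctrnorm; rewrite ?hjc ?hTih ?hSh; mxexpand; entring.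
rewrite KG KP -!scalemxAr !mulmxA cT cS2.
ctrnorm; rewrite ?hjc ?hTih ?hSh; mxexpand; rewrite ?jj ?hj; mxexpand; entring.
Qed.

Variable lam : C.
Hypothesis hAR : A *m R = 1%:M + lam *: R.
Lemma hAR' p (Y : 'M[C]_(p,n)) : Y *m A *m R = Y + lam *: (Y *m R).
Proof. by rewrite -mulmxA hAR mulmxDr mulmx1 -scalemxAr. Qed.

Lemma F3 : (lam%:M - 'i *: (j *m Cm)) *m (1%:M - 'i *: (j *m ctr P *m invmx S *m R *m P))
  = (1%:M - 'i *: (j *m ctr G *m Ti *m R *m G)) *m (lam%:M - 'i *: j).
Proof.
apply/eqP; rewrite -subr_eq0; apply/eqP.
transitivity (j *m ('i *: (ctr G *m Ti *m A *m R *m G) - 'i *: (ctr P *m invmx S *m A *m R *m P)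
   - Cm *m j *m ctr P *m invmx S *m R *m P + ctr G *m Ti *m R *m G *m j)); last by rewrite ZZ mulmx0.
ctrnorm; rewrite ?hjc ?hTih ?hSh; mxexpand; rewrite ?hAR' ?hAR; mxexpand; rewrite ?jj ?hj; mxexpand; entring.
Qed.
End R.

Lemma jCw : j *m Cm *m (1%:M - 'i *: (j *m ctr P *m invmx S *m invmx A *m P))
   = (1%:M - 'i *: (j *m ctr G *m Ti *m invmx A *m G)) *m j.
Proof.
have hRA0 : invmx A *m A = A *m invmx A by rewrite mulVmx ?mulmxV.
have z := ZZ hRA0.
apply/eqP; rewrite -subr_eq0; apply/eqP.
transitivity ('i *: (j *m ('i *: (ctr G *m Ti *m A *m invmx A *m G) - 'i *: (ctr P *m invmx S *m A *m invmx A *m P)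
   - Cm *m j *m ctr P *m invmx S *m invmx A *m P + ctr G *m Ti *m invmx A *m G *m j))); last first.
  by rewrite z mulmx0 scaler0.
ctrnorm; rewrite ?hjc ?hTih ?hSh; mxexpand; rewrite ?cA1; mxexpand; rewrite ?jj ?hj; mxexpand; entring.
Qed.

Lemma junit : (1%:M - 'i *: (j *m ctr P *m invmx S *m invmx A *m P)) *m j
   *m ctr (1%:M - 'i *: (j *m ctr P *m invmx S *m invmx A *m P)) = j.
Proof.
ctrnorm; rewrite ?hjc ?hSh; mxexpand; rewrite ?jj ?hj; mxexpand; rewrite ?hK; mxexpand;
  rewrite ?cA2 ?cS2 ?cAc1 ?cS1; mxexpand; entring.
Qed.

Lemma Cquad (u : 'cV[C]_n) (v : 'cV[C]_m) :
  ctr u *m T *m u + ctr u *m G *m v + ctr v *m ctr G *m u + ctr v *m (1%:M + ctr P *m invmx S *m P) *m v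
  = ctr (ctr A *m u + invmx S *m P *m v) *m S *m (ctr A *m u + invmx S *m P *m v)
    + ctr (ctr P *m u + 'i *: (j *m v)) *m (ctr P *m u + 'i *: (j *m v)) + ctr u *m S *m u.
Proof.
ctrnorm; rewrite ?hjc ?hSh; mxexpand; rewrite ?jj ?cS1 ?cS2; mxexpand; entring.
Qed.
End Step.

Lemma inv_eq (C : numClosedFieldType) p (X Y : 'M[C]_p) : X \in unitmx -> X *m Y = 1%:M -> invmx X = Y.
Proof. by move=> hX e; rewrite -(mulKmx hX Y) e mulmx1. Qed.

Lemma CjC_gen (C : numClosedFieldType) m (j Cm w0 w1 : 'M[C]_m) :
  j *m j = 1%:M -> ctr j = j -> ctr Cm = Cm -> j *m Cm *m w0 = w1 *m j ->
  w0 *m j *m ctr w0 = j -> w1 *m j *m ctr w1 = j -> Cm *m j *m Cm = j.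
Proof.
move=> hj hjc hC hjCw h0 h1.
have jj p (X : 'M[C]_(p,m)) : X *m j *m j = X by rewrite -mulmxA hj mulmx1.
have e1 : w0 *m (j *m ctr w0 *m j) = 1%:M by rewrite !mulmxA h0 hj.
have e2 : w1 *m (j *m ctr w1 *m j) = 1%:M by rewrite !mulmxA h1 hj.
have e1' : ctr w0 *m j *m w0 = j.
  transitivity (j *m ((j *m ctr w0 *m j) *m w0)); first by rewrite !mulmxA hj mul1mx.
  by rewrite (mulmx1C e1) mulmx1.
have e2' : ctr w1 *m j *m w1 = j.
  transitivity (j *m ((j *m ctr w1 *m j) *m w1)); first by rewrite !mulmxA hj mul1mx.
  by rewrite (mulmx1C e2) mulmx1.
have eC : Cm = j *m w1 *m ctr w0 *m j.
  transitivity (Cm *m (w0 *m (j *m ctr w0 *m j))); first by rewrite e1 mulmx1.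
  transitivity (j *m (j *m Cm *m w0) *m j *m ctr w0 *m j); first by rewrite !mulmxA hj mul1mx.
  by rewrite hjCw !mulmxA jj.
have g1 p (Y : 'M[C]_(p,m)) : Y *m ctr w1 *m j *m w1 = Y *m j.
  by rewrite -!mulmxA [ctr w1 *m (j *m w1)]mulmxA e2'.
have g0 p (Y : 'M[C]_(p,m)) : Y *m w0 *m j *m ctr w0 = Y *m j.
  by rewrite -!mulmxA [w0 *m (j *m ctr w0)]mulmxA h0.
rewrite -{1}hC eC !ctrM ctrK hjc !mulmxA jj g1 g0 hj mul1mx //.
Qed.

Section Cp.
Variables (C : numClosedFieldType) (n m : nat) (j : 'M[C]_m) (A S Ti : 'M[C]_n) (P : 'M[C]_(n,m)).
Hypotheses (hj : j *m j = 1%:M) (hjc : ctr j = j) (hSpd : posdef S).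
Local Notation G := (A *m P + 'i *: (P *m j)).
Local Notation T := (S + A *m S *m ctr A + P *m ctr P).
Hypotheses (hTi2 : T *m Ti = 1%:M) (hTih : ctr Ti = Ti).
Local Notation Cm := (1%:M + ctr P *m invmx S *m P - ctr G *m Ti *m G).

Lemma Cpos : posdef Cm.
Proof.
have hS := posdef_unit hSpd; have hSh := posdef_herm hSpd.
move=> v v0; set u := - (Ti *m G *m v).
have Tu : T *m u = - (G *m v) by rewrite /u mulmxN !mulmxA hTi2 mul1mx.
have e : ctr v *m Cm *m v = ctr u *m T *m u + ctr u *m G *m v + ctr v *m ctr G *m u
     + ctr v *m (1%:M + ctr P *m invmx S *m P) *m v.
  rewrite (_ : ctr u *m T *m u = - (ctr u *m G *m v)); last by rewrite -mulmxA Tu mulmxN mulmxA.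
  rewrite addNr add0r /u; ctrnorm; rewrite ?hTih; mxexpand; entring.
rewrite e (Cquad A P hj hjc hS hSh) !eD.
have [u0|u0] := eqVneq u 0.
  rewrite u0 mulmx0 add0r; apply: ltr_wpDr; first exact: posdef_ge0.
  apply: ltr_wpDl; first exact: posdef_ge0.
  apply: cnorm_gt0; rewrite mulmx0 add0r scaler_eq0 negb_or neq0Ci /=.
  apply: contra v0 => /eqP jv; apply/eqP.
  by rewrite -[v]mul1mx -hj -mulmxA jv mulmx0.
apply: ltr_pwDr; first exact: hSpd.
by rewrite addr_ge0 ?cnorm_ge0 ?posdef_ge0.
Qed.

Lemma Cherm : ctr Cm = Cm.
Proof.
have hSh := posdef_herm hSpd.
ctrnorm; rewrite ?hTih ?hSh ?hjc; mxexpand; entring.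
Qed.
End Cp.

Section Next.
Variables (C : numClosedFieldType) (n m : nat) (j : 'M[C]_m) (A S : 'M[C]_n) (P : 'M[C]_(n,m)).
Hypotheses (hj : j *m j = 1%:M) (hjc : ctr j = j) (hA : A \in unitmx) (hSpd : posdef S)
  (hid : A *m S - S *m ctr A = 'i *: (P *m j *m ctr P)).
Local Notation G := (A *m P + 'i *: (P *m j)).
Local Notation T := (S + A *m S *m ctr A + P *m ctr P).
Local Notation S' := (S + invmx A *m S *m invmx (ctr A) + invmx A *m P *m ctr P *m invmx (ctr A)).
Local Notation Q := (P + 'i *: (invmx A *m P *m j)).

Lemma nS : S \in unitmx. Proof. exact: posdef_unit. Qed.
Lemma nSh : ctr S = S. Proof. exact: posdef_herm. Qed.
Lemma nAc : ctr A \in unitmx. Proof. by rewrite ctr_unit. Qed.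

Lemma Spd' : posdef S'.
Proof.
move=> v v0.
have e : ctr v *m S' *m v = ctr v *m S *m v + ctr (invmx (ctr A) *m v) *m S *m (invmx (ctr A) *m v)
   + ctr (ctr P *m (invmx (ctr A) *m v)) *m (ctr P *m (invmx (ctr A) *m v)).
  ctrnorm; rewrite ?nSh; mxexpand; entring.
rewrite e !eD; apply: ltr_wpDr; first exact: cnorm_ge0.
apply: ltr_wpDr; first exact: posdef_ge0.
exact: hSpd.
Qed.

Lemma TS' : T = A *m S' *m ctr A.
Proof.
mxexpand; rewrite ?(mulmxV hA) ?(mulmxKV nAc); mxexpand; rewrite ?(mulmxKV nAc); mxexpand; entring.
Qed.

Lemma unitT : T \in unitmx.
Proof. by rewrite TS' !unitmx_mul hA nAc (posdef_unit Spd'). Qed.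

Lemma eS' : S' = invmx A *m T *m invmx (ctr A).
Proof. by rewrite TS' !mulmxA (mulVmx hA) mul1mx (mulmxK nAc). Qed.

Lemma invS' : invmx S' = ctr A *m invmx T *m A.
Proof.
rewrite {1}eS'; apply: inv_eq.
  by rewrite !unitmx_mul unitmx_inv hA unitT unitmx_inv nAc.
by rewrite !mulmxA (mulmxKV nAc) (mulmxK unitT) (mulVmx hA).
Qed.

Lemma Qconv : Q = invmx A *m G.
Proof. by rewrite mulmxDr mulmxA (mulVmx hA) mul1mx -scalemxAr mulmxA. Qed.

Lemma hermS' : ctr S' = S'.
Proof. by rewrite eS' !ctrM !ctrV ctrK (hermT A P nSh) !mulmxA. Qed.

Lemma idS' : A *m S' - S' *m ctr A = 'i *: (Q *m j *m ctr Q).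
Proof.
rewrite eS' Qconv.
transitivity (invmx A *m (A *m T - T *m ctr A) *m invmx (ctr A)).
  do 3 (mxexpand; rewrite ?(mulmxV hA) ?(mulVmx hA) ?(mulmxKV nAc) ?(mulmxK nAc)).
  mxexpand; entring.
rewrite (idT hj hjc hid); ctrnorm; rewrite ?hjc; mxexpand; entring.
Qed.

Lemma Cconv : ctr Q *m invmx S' *m Q = ctr G *m invmx T *m G.
Proof. by rewrite Qconv invS' !ctrM ctrV !mulmxA (mulmxKV nAc) (mulmxK hA). Qed.

Lemma wconv (R : 'M[C]_n) : R *m A = A *m R ->
  ctr Q *m invmx S' *m R *m Q = ctr G *m invmx T *m R *m G.
Proof.
move=> hRA; have e p (Y : 'M[C]_(p,n)) : Y *m A *m R = Y *m R *m A by rewrite -!mulmxA hRA.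
by rewrite Qconv invS' !ctrM ctrV !mulmxA (mulmxKV nAc) e (mulmxK hA).
Qed.
End Next.


Section PerK.
Variables (C : numClosedFieldType) (n m : nat) (j : 'M[C]_m) (A S : 'M[C]_n) (P : 'M[C]_(n,m)).
Hypotheses (hj : j *m j = 1%:M) (hjc : ctr j = j) (hA : A \in unitmx) (hSpd : posdef S)
  (hid : A *m S - S *m ctr A = 'i *: (P *m j *m ctr P)).
Local Notation G := (A *m P + 'i *: (P *m j)).
Local Notation T := (S + A *m S *m ctr A + P *m ctr P).
Local Notation S' := (S + invmx A *m S *m invmx (ctr A) + invmx A *m P *m ctr P *m invmx (ctr A)).
Local Notation Q := (P + 'i *: (invmx A *m P *m j)).
Local Notation Ckk := (1%:M + ctr P *m invmx S *m P - ctr Q *m invmx S' *m Q).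

Lemma perk_pos : posdef Ckk /\ Ckk *m j *m Ckk = j.
Proof.
have hS := nS hSpd; have hSh := nSh hSpd.
have hT := unitT P hA hSpd.
have hTi1 : invmx T *m T = 1%:M := mulVmx hT.
have hTi2 : T *m invmx T = 1%:M := mulmxV hT.
have hTh : ctr T = T := hermT A P hSh.
have hTih : ctr (invmx T) = invmx T by rewrite ctrV hTh.
rewrite (Cconv j P hA hSpd); split; first exact: (Cpos hj hjc hSpd hTi2).
have h1 := Cherm A P hjc hSpd hTih.
have h2 := jCw hj hjc hA hS hid hTi1.
have h3 := junit hjc hA hS hSh hid.
have h4 := junit hjc hA hT hTh (idT hj hjc hid).
have := CjC_gen hj hjc h1.
move=> /(_ _ _ h2).
move=> /(_ h3).
move=> /(_ h4).
done.
Qed.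

Lemma perk_w (z : C) : z != 0 -> (A - (- z^-1)%:M) \in unitmx ->
  (1%:M + ('i * z) *: (j *m Ckk)) *m (1%:M - 'i *: (j *m ctr P *m invmx S *m invmx (A - (- z^-1)%:M) *m P))
  = (1%:M - 'i *: (j *m ctr Q *m invmx S' *m invmx (A - (- z^-1)%:M) *m Q)) *m (1%:M + ('i * z) *: j).
Proof.
move=> z0 hR; set lam := - z^-1; set R := invmx (A - lam%:M).
have hS := nS hSpd; have hSh := nSh hSpd.
have hT := unitT P hA hSpd.
have hTi1 : invmx T *m T = 1%:M := mulVmx hT.
have hAR : A *m R = 1%:M + lam *: R by rewrite -(mulmxV hR) mulmxBl mul_scalar_mx subrK.
have hRA : R *m A = A *m R by rewrite hAR -(mulVmx hR) mulmxBr mul_mx_scalar subrK.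
have ew : j *m ctr Q *m invmx S' *m R *m Q = j *m ctr G *m invmx T *m R *m G.
  have e := wconv j P hA hSpd hRA.
  by rewrite -!mulmxA; move: e; rewrite -!mulmxA => ->.
have conv (X : 'M[C]_m) : 1%:M + ('i * z) *: X = (-z) *: (lam%:M - 'i *: X).
  by rewrite scalerBr scale_scalar_mx /lam mulrNN mulfV // scalerA mulNr scaleNr opprK mulrC.
rewrite ew (Cconv j P hA hSpd) !conv -scalemxAl -scalemxAr; congr (_ *: _).
exact: (F3 hj hjc hS hid hTi1 hRA hAR).
Qed.
End PerK.

Unset Implicit Arguments.
Theorem theorem2p5 (C : numClosedFieldType) (m1 m2 n : nat)
  (A S0 : 'M[C]_n) (Pi0 : 'M[C]_(n, m1 + m2)) :
  (0 < m1)%N -> (0 < m2)%N ->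
  admissible (jmat C m1 m2) A S0 Pi0 ->
  (forall k : nat, Sk (jmat C m1 m2) A S0 Pi0 k \in unitmx) /\
  (forall k : nat,
     posdef (Ck (jmat C m1 m2) A S0 Pi0 k) /\
     Ck (jmat C m1 m2) A S0 Pi0 k *m jmat C m1 m2 *m Ck (jmat C m1 m2) A S0 Pi0 k
       = jmat C m1 m2) /\
  (forall (k : nat) (z : C), z != 0 ->
     (A - (- z^-1)%:M) \in unitmx ->
     wA (jmat C m1 m2) A S0 Pi0 0 (- z^-1) \in unitmx ->
     Wk (jmat C m1 m2) A S0 Pi0 z k =
       wA (jmat C m1 m2) A S0 Pi0 k (- z^-1)
       *m (1%:M + ('i * z) *: jmat C m1 m2) ^+ k
       *m invmx (wA (jmat C m1 m2) A S0 Pi0 0 (- z^-1))).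
Proof.
move=> _ _ [hA hS0 hid0].
set j := jmat C m1 m2.
have hj : j *m j = 1%:M.
  rewrite /j /jmat mulmx_block !mulmx0 !mul0mx !mulmx1 !addr0 !add0r mulmxN mulmx1 opprK.
  by rewrite -scalar_mx_block.
have hjc : ctr j = j.
  by rewrite /j /jmat /ctr map_block_mx tr_block_mx map_mxN !map_mx1 !map_mx0 !trmx0 !tr_scalar_mx linearN /= tr_scalar_mx.
have inv : forall k, posdef (Sk j A S0 Pi0 k) /\
   A *m Sk j A S0 Pi0 k - Sk j A S0 Pi0 k *m ctr A = 'i *: (Pik j A Pi0 k *m j *m ctr (Pik j A Pi0 k)).
  elim=> [|k [pd id]]; first by split.
  split; [exact: (Spd' A (Pik j A Pi0 k) pd) | exact: (idS' hj hjc hA id)].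
split; first by move=> k; exact: (posdef_unit (inv k).1).
split; first by move=> k; have [pd id] := inv k; exact: (perk_pos hj hjc hA pd id).
move=> k z z0 hR hw0; elim: k => [|k IH].
  by rewrite expr0 /= mulmx1 mulmxV.
have [pd id] := inv k.
have st := perk_w hj hjc hA pd id z0 hR.
have eE : (1%:M + ('i * z) *: j) ^+ k.+1 = (1%:M + ('i * z) *: j) *m (1%:M + ('i * z) *: j) ^+ k := exprS _ k.
rewrite eE /= IH !mulmxA.
congr (_ *m _ *m _); exact: st.
Qed.
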